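(* Let $\mathcal D_0$ be an open subset of $\mathcal D$ on which each map $\theta\mapsto\langle p_\theta,H_j\rangle$ ($j=1,\dots,n$) is continuous. Then $\Phi$ is differentiable on $\mathcal D_0$ and $$\frac{\partial\Phi}{\partial\theta_j}(\theta)=-\langle p_\theta,H_j\rangle,\qquad\theta\in\mathcal D_0,\ j=1,\dots,n.$$
   Context: Let $A$ be a finite or countable set, $\mathcal M_1^+(A)$ the probability distributions on $A$, $I(p)=\sum_a h_a(p_a)$ a generalised entropy (each $h_a:[0,1]\to\mathbb R$ continuous, strictly concave, $h_a(0)=h_a(1)=0$), $H_1,\dots,H_n:A\to\mathbb R$ bounded below, $\langle p,X\rangle=\sum_ap_aX(a)$. $p^*$ satisfies the variational principle with parameters $\theta\in\mathbb R^n$ if $+\infty>I(p^* )-\sum_j\theta_j\langle p^*,H_j\rangle\ge I(p)-\sum_j\theta_j\langle p,H_j\rangle$ for all $p\in\mathcal M_1^+(A)$. Let $\mathcal D$ be the set of $\theta$ for which such $p^*$ exists (it is unique), denoted $p_\theta$. For $U$ with $U_j=\langle p_\eta,H_j\rangle$ for some $\eta\in\mathcal D$, $S(U)=I(p_\eta)$. The Massieu function is $\Phi(\theta)=\sup_U\{S(U)-\sum_j\theta_jU_j\}$ (supremum over $U$ where $S$ is defined); for $\theta\in\mathcal D$ it equals $I(p_\theta)-\sum_j\theta_j\langle p_\theta,H_j\rangle$. *)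

(* Defs.v *)
From Stdlib Require Import Reals Lra Classical ClassicalEpsilon.
Open Scope R_scope.

(* The countable (or finite) alphabet A is represented as a subset of nat,
   given by a boolean predicate inA.  Functions on A are functions on nat
   whose values outside A are irrelevant. *)

Inductive ER : Type := Fin (r : R) | PInf | MInf.

Definition ER_add (x y : ER) : option ER :=
  match x, y with
  | Fin a, Fin b => Some (Fin (a + b))
  | PInf, MInf | MInf, PInf => None
  | PInf, _ | _, PInf => Some PInf
  | MInf, _ | _, MInf => Some MInf
  end.

(* (- t) * x, with the convention 0 * (+-oo) = 0 *)
Definition ER_mulneg (t : R) (x : ER) : ER :=
  match x with
  | Fin a => Fin (- t * a)
  | PInf => match Rlt_dec 0 t with
            | left _ => MInf
            | right _ => match Rlt_dec t 0 with left _ => PInf | right _ => Fin 0 end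
            end
  | MInf => match Rlt_dec 0 t with
            | left _ => PInf
            | right _ => match Rlt_dec t 0 with left _ => MInf | right _ => Fin 0 end
            end
  end.

Definition ER_le (x y : ER) : Prop :=
  match x, y with
  | MInf, _ => True
  | _, PInf => True
  | Fin a, Fin b => a <= b
  | _, _ => False
  end.

Fixpoint fsum (n : nat) (f : nat -> R) : R :=
  match n with O => 0 | S k => fsum k f + f k end.

(* Value of a series sum_a u a: its limit if the partial sums converge,
   +oo otherwise.  (All series below have terms bounded below by those of
   an absolutely convergent series, so divergence means divergence to +oo.) *)
Definition ser (u : nat -> R) : ER :=
  match excluded_middle_informative (exists s, Un_cv (fun N => sum_f_R0 u N) s) with
  | left Hs => Fin (proj1_sig (constructive_indefinite_description _ Hs))
  | right _ => PInf
  end.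

Definition is_distr (inA : nat -> bool) (p : nat -> R) : Prop :=
  (forall a, 0 <= p a) /\ (forall a, inA a = false -> p a = 0) /\
  infinite_sum p 1.

Definition Ient (inA : nat -> bool) (h : nat -> R -> R) (p : nat -> R) : ER :=
  ser (fun a => if inA a then h a (p a) else 0).

Definition expect (inA : nat -> bool) (p : nat -> R) (X : nat -> R) : ER :=
  ser (fun a => if inA a then p a * X a else 0).

Fixpoint objective (inA : nat -> bool) (h : nat -> R -> R) (H : nat -> nat -> R)
  (theta : nat -> R) (p : nat -> R) (k : nat) : option ER :=
  match k with
  | O => Some (Ient inA h p)
  | S k' => match objective inA h H theta p k' with
            | None => None
            | Some x => ER_add x (ER_mulneg (theta k') (expect inA p (H k')))
            end
  end.

Definition var_principle (inA : nat -> bool) (h : nat -> R -> R) (n : nat)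
  (H : nat -> nat -> R) (theta : nat -> R) (ps : nat -> R) : Prop :=
  is_distr inA ps /\
  exists c : R, objective inA h H theta ps n = Some (Fin c) /\
    forall p, is_distr inA p ->
      forall v, objective inA h H theta p n = Some v -> ER_le v (Fin c).

Definition Dset inA h n H (theta : nat -> R) : Prop :=
  exists ps, var_principle inA h n H theta ps.

(* p_theta (the unique maximiser when theta is in D) *)
Definition p_theta inA h n H (theta : nat -> R) : nat -> R :=
  match excluded_middle_informative (Dset inA h n H theta) with
  | left Hd => proj1_sig (constructive_indefinite_description _ Hd)
  | right _ => fun _ => 0
  end.

(* the values S(U) - theta.U, with U_j = <p_eta,H_j>, S(U) = I(p_eta), eta in D *)
Definition massieu_vals inA h n H (theta : nat -> R) (v : R) : Prop :=
  exists eta (s : R) (U : nat -> R),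
    Dset inA h n H eta /\
    Ient inA h (p_theta inA h n H eta) = Fin s /\
    (forall j, (j < n)%nat -> expect inA (p_theta inA h n H eta) (H j) = Fin (U j)) /\
    v = s - fsum n (fun j => theta j * U j).

Definition Phi inA h n H (theta : nat -> R) : ER :=
  let E := massieu_vals inA h n H theta in
  match excluded_middle_informative (bound E /\ exists x, E x) with
  | left Hb => Fin (proj1_sig (completeness E (proj1 Hb) (proj2 Hb)))
  | right _ => match excluded_middle_informative (exists x, E x) with
               | left _ => PInf
               | right _ => MInf
               end
  end.

(* Main.v *)
Require Import Defs.
From Stdlib Require Import Reals.
Open Scope R_scope.


From Stdlib Require Import Lra Lia Classical ClassicalEpsilon.

Lemma fsum_ext n f g : (forall j, (j < n)%nat -> f j = g j) -> fsum n f = fsum n g.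
Proof. induction n; simpl; intros Hf; auto. rewrite IHn by (intros; apply Hf; lia). rewrite Hf by lia. auto. Qed.

Lemma fsum_plus n f g : fsum n (fun j => f j + g j) = fsum n f + fsum n g.
Proof. induction n; simpl; [ring|]. rewrite IHn; ring. Qed.

Lemma fsum_minus n f g : fsum n (fun j => f j - g j) = fsum n f - fsum n g.
Proof. induction n; simpl; [ring|]. rewrite IHn; ring. Qed.

Lemma fsum_le n f g : (forall j, (j < n)%nat -> f j <= g j) -> fsum n f <= fsum n g.
Proof. induction n; simpl; intros Hf; [lra|]. assert (fsum n f <= fsum n g) by (apply IHn; intros; apply Hf; lia). assert (f n <= g n) by (apply Hf; lia). lra. Qed.

Lemma fsum_scal n c f : fsum n (fun j => c * f j) = c * fsum n f.
Proof. induction n; simpl; [ring|]. rewrite IHn; ring. Qed.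

Lemma fsum_split n a b c : fsum n (fun j => (a j + b j) * c j) =
  fsum n (fun j => a j * c j) - fsum n (fun j => - c j * b j).
Proof. induction n; simpl; [ring|]. rewrite IHn; ring. Qed.

Lemma fsum_abs_pos n f : 0 <= fsum n (fun j => Rabs (f j)).
Proof. induction n; simpl; [lra|]. pose proof (Rabs_pos (f n)); lra. Qed.

Lemma objective_fin inA h H th p s U k :
  Ient inA h p = Fin s -> (forall j, (j < k)%nat -> expect inA p (H j) = Fin (U j)) ->
  objective inA h H th p k = Some (Fin (s - fsum k (fun j => th j * U j))).
Proof.
  intros HI; induction k; intros HU; simpl.
  - rewrite HI. do 2 f_equal. ring.
  - rewrite IHk by (intros; apply HU; lia). rewrite (HU k) by lia. simpl. do 2 f_equal. ring.
Qed.

Lemma objective_Ient_fin inA h H th p k : forall c,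
  (forall j, (j < k)%nat -> exists u, expect inA p (H j) = Fin u) ->
  objective inA h H th p k = Some (Fin c) -> exists s, Ient inA h p = Fin s.
Proof.
  induction k; intros c HU Ho; simpl in Ho.
  - inversion Ho; eauto.
  - destruct (HU k) as [u Hu]; [lia|]. rewrite Hu in Ho.
    destruct (objective inA h H th p k) as [x|] eqn:E; [|discriminate].
    destruct x; simpl in Ho; try discriminate.
    apply (IHk r); [intros; apply HU; lia|auto].
Qed.

Lemma p_theta_spec inA h n H th : Dset inA h n H th -> var_principle inA h n H th (p_theta inA h n H th).
Proof.
  intros Hd. unfold p_theta. destruct (excluded_middle_informative _) as [Hd'|Hd'].
  - destruct (constructive_indefinite_description _ Hd'); simpl; auto.
  - contradiction.
Qed.

Lemma Phi_eq inA h n H th c :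
  (forall v, massieu_vals inA h n H th v -> v <= c) -> massieu_vals inA h n H th c ->
  Phi inA h n H th = Fin c.
Proof.
  intros Hub Hin. unfold Phi. destruct (excluded_middle_informative _) as [Hb|Hb].
  - f_equal. destruct (completeness _ _ _) as [m [Hm1 Hm2]]. simpl.
    apply Rle_antisym. apply Hm2. intros x Hx; apply Hub; auto. apply Hm1; auto.
  - exfalso; apply Hb; split. exists c; intros x Hx; apply Hub; auto. exists c; auto.
Qed.

Lemma massieu_ub inA h n H th c :
  (forall p, is_distr inA p -> forall w, objective inA h H th p n = Some w -> ER_le w (Fin c)) ->
  forall v, massieu_vals inA h n H th v -> v <= c.
Proof.
  intros Hmax v [eta [s [U [HD [HI [HU Hv]]]]]].
  destruct (p_theta_spec _ _ _ _ _ HD) as [Hdist _].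
  pose proof (objective_fin inA h H th _ s U n HI HU) as Ho.
  specialize (Hmax _ Hdist _ Ho). simpl in Hmax. subst v. exact Hmax.
Qed.

Lemma min_delta (n : nat) (P : nat -> R -> Prop) :
  (forall j d d', 0 < d' <= d -> P j d -> P j d') ->
  (forall j, (j < n)%nat -> exists d, 0 < d /\ P j d) ->
  exists d, 0 < d /\ forall j, (j < n)%nat -> P j d.
Proof.
  intros Hm; induction n; intros Hex.
  - exists 1; split; [lra|]; intros; lia.
  - destruct IHn as [d1 [Hd1 HP1]]. intros; apply Hex; lia.
    destruct (Hex n) as [d2 [Hd2 HP2]]; [lia|].
    exists (Rmin d1 d2). split. apply Rmin_pos; auto.
    intros j Hj. destruct (Nat.eq_dec j n) as [->|Hne].
    + apply Hm with d2; auto. split. apply Rmin_pos; auto. apply Rmin_r.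
    + apply Hm with d1; [|apply HP1; lia]. split. apply Rmin_pos; auto. apply Rmin_l.
Qed.

Theorem mainTheorem7
  (inA : nat -> bool) (h : nat -> R -> R) (n : nat) (H : nat -> nat -> R)
  (* each h_a continuous on [0,1] *)
  (h_cont : forall a, inA a = true -> forall x, 0 <= x <= 1 ->
     forall eps, 0 < eps -> exists delta, 0 < delta /\
       forall y, 0 <= y <= 1 -> Rabs (y - x) < delta -> Rabs (h a y - h a x) < eps)
  (* each h_a strictly concave on [0,1] *)
  (h_conc : forall a, inA a = true -> forall x y t, 0 <= x <= 1 -> 0 <= y <= 1 ->
     x <> y -> 0 < t < 1 ->
     t * h a x + (1 - t) * h a y < h a (t * x + (1 - t) * y))
  (h_0 : forall a, inA a = true -> h a 0 = 0)
  (h_1 : forall a, inA a = true -> h a 1 = 0)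
  (* H_1, ..., H_n bounded below on A *)
  (H_bdd : forall j, (j < n)%nat -> exists m, forall a, inA a = true -> m <= H j a)
  (D0 : (nat -> R) -> Prop)
  (D0_open : forall theta, D0 theta -> exists r, 0 < r /\
     forall theta', (forall j, (j < n)%nat -> Rabs (theta' j - theta j) < r) -> D0 theta')
  (D0_sub : forall theta, D0 theta -> Dset inA h n H theta)
  (e : nat -> (nat -> R) -> R)
  (e_def : forall j, (j < n)%nat -> forall theta, D0 theta ->
     expect inA (p_theta inA h n H theta) (H j) = Fin (e j theta))
  (e_cont : forall j, (j < n)%nat -> forall theta, D0 theta ->
     forall eps, 0 < eps -> exists delta, 0 < delta /\
       forall theta', D0 theta' -> (forall k, (k < n)%nat -> Rabs (theta' k - theta k) < delta) ->
         Rabs (e j theta' - e j theta) < eps) :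
  forall theta, D0 theta ->
    exists phi : R, Phi inA h n H theta = Fin phi /\
    forall eps, 0 < eps -> exists delta, 0 < delta /\
      forall dt : nat -> R, (forall j, (j < n)%nat -> Rabs (dt j) < delta) ->
        exists v : R, Phi inA h n H (fun j => theta j + dt j) = Fin v /\
          Rabs (v - phi - fsum n (fun j => - e j theta * dt j))
            <= eps * fsum n (fun j => Rabs (dt j)).
Proof.
  assert (info : forall t, D0 t -> exists s,
    Ient inA h (p_theta inA h n H t) = Fin s /\
    (forall v, massieu_vals inA h n H t v -> v <= s - fsum n (fun j => t j * e j t)) /\
    Phi inA h n H t = Fin (s - fsum n (fun j => t j * e j t))).
  { intros t Ht. destruct (p_theta_spec _ _ _ _ _ (D0_sub t Ht)) as [Hdist [c [Hoc Hmax]]].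
    destruct (objective_Ient_fin inA h H t (p_theta inA h n H t) n c) as [s Hs]; auto.
    { intros j Hj; exists (e j t); apply e_def; auto. }
    pose proof (objective_fin inA h H t _ s (fun j => e j t) n Hs (fun j Hj => e_def j Hj t Ht)) as Ho.
    rewrite Hoc in Ho. inversion Ho; subst c.
    exists s. split; [auto|]. split.
    - apply massieu_ub; auto.
    - apply Phi_eq. apply massieu_ub; auto.
      exists t, s, (fun j => e j t). repeat split; auto. }
  assert (mv : forall t0 t1 s0, D0 t0 -> Ient inA h (p_theta inA h n H t0) = Fin s0 ->
     massieu_vals inA h n H t1 (s0 - fsum n (fun j => t1 j * e j t0))).
  { intros t0 t1 s0 Ht0 Hs0. exists t0, s0, (fun j => e j t0). repeat split; auto.
    all: try (apply D0_sub; auto); try (intros; apply e_def; auto). }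
  intros th Hth.
  destruct (info th Hth) as [s [Hs [Hub HPhi]]].
  eexists; split; [exact HPhi|].
  intros eps Heps.
  destruct (D0_open th Hth) as [r [Hr Hopen]].
  destruct (min_delta n (fun j d => forall theta', D0 theta' ->
       (forall k, (k < n)%nat -> Rabs (theta' k - th k) < d) -> Rabs (e j theta' - e j th) < eps))
    as [d [Hd HP]].
  { intros j d0 d' Hd' Hp t' Ht' Hk. apply Hp; auto. intros k Hk'. specialize (Hk k Hk'). lra. }
  { intros j Hj. apply e_cont; auto. }
  exists (Rmin r d). split. apply Rmin_pos; auto.
  intros dt Hdt.
  set (th' := fun j => th j + dt j).
  assert (Hsmall : forall k, (k < n)%nat -> Rabs (th' k - th k) < Rmin r d).
  { intros k Hk. unfold th'. replace (th k + dt k - th k) with (dt k) by ring. auto. }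
  assert (Hth' : D0 th').
  { apply Hopen. intros k Hk. pose proof (Hsmall k Hk). pose proof (Rmin_l r d). lra. }
  destruct (info th' Hth') as [s' [Hs' [Hub' HPhi']]].
  eexists; split; [exact HPhi'|].
  pose proof (Hub' _ (mv th th' s Hth Hs)) as L1.
  pose proof (Hub _ (mv th' th s' Hth' Hs')) as L2.
  assert (E1 : fsum n (fun j => th' j * e j th) =
     fsum n (fun j => th j * e j th) - fsum n (fun j => - e j th * dt j))
    by (apply fsum_split).
  assert (E2 : fsum n (fun j => th' j * e j th') =
     fsum n (fun j => th j * e j th') - fsum n (fun j => - e j th' * dt j))
    by (apply fsum_split).
  assert (Hdiff : fsum n (fun j => - e j th' * dt j) - fsum n (fun j => - e j th * dt j)
      <= eps * fsum n (fun j => Rabs (dt j))).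
  { rewrite <- fsum_scal.
    replace (fsum n (fun j => - e j th' * dt j) - fsum n (fun j => - e j th * dt j))
      with (fsum n (fun j => (e j th - e j th') * dt j)).
    2:{ rewrite <- fsum_minus. apply fsum_ext. intros; ring. }
    apply fsum_le. intros j Hj.
    assert (Hb : Rabs (e j th' - e j th) < eps).
    { apply HP; auto. intros k Hk. pose proof (Hsmall k Hk). pose proof (Rmin_r r d). lra. }
    eapply Rle_trans. apply Rle_abs. rewrite Rabs_mult.
    apply Rmult_le_compat_r. apply Rabs_pos.
    rewrite Rabs_minus_sym. lra. }
  pose proof (fsum_abs_pos n dt).
  rewrite Rabs_right; lra.
Qed.
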